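(* Let $\tau$ be any substitution whose ll and rl graphs are subfixed, and let $W=\{u\in\mathcal{A}^2 : \exists a\in\mathcal{A},\ u \text{ is a factor of } \tau(a)\}$. Then \[\mathcal{L}_2(\tau)=W\cup\{\mathrm{rl}(\tau(a))\,\mathrm{ll}(\tau(b)) : ab\in W\},\] where for a nonempty word $z$, $\mathrm{ll}(z)$ and $\mathrm{rl}(z)$ denote its leftmost and rightmost letter.
   Context: Let $\mathcal{A}$ be a finite nonempty alphabet, $\mathcal{A}^2$ the set of words of length $2$. A word $u$ is a factor of $v$ if $v=w_1uw_2$ for some words $w_1,w_2$. A substitution is a map $\tau:\mathcal{A}\to\mathcal{A}^+$ (nonempty words), extended to a concatenation-respecting map on words. The language $\mathcal{L}(\tau)$ is the set of words that are factors of $\tau^n(a)$ for some letter $a$ and some $n\ge1$, and $\mathcal{L}_2(\tau)$ is its set of words of length $2$. The ll graph (resp. rl graph) is the directed graph on vertex set $\mathcal{A}$ with exactly one edge from each letter $a$ to the leftmost (resp. rightmost) letter of $\tau(a)$. Such a graph is subfixed if for every vertex $x$, either the edge leaving $x$ goes to $x$, or it goes to a vertex $y$ whose outgoing edge goes to $y$ itself. *)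

(* Defs.v *)
From mathcomp Require Import all_boot.
Set Implicit Arguments. Unset Strict Implicit. Unset Printing Implicit Defensive.

(* Words over alphabet A are sequences [seq A]; a substitution is tau : A -> seq A
   (nonemptiness of images is a separate hypothesis). *)

Definition subst_word (A : finType) (tau : A -> seq A) (w : seq A) : seq A :=
  flatten (map tau w).

Definition factor (A : finType) (u v : seq A) : Prop :=
  exists w1 w2, v = w1 ++ u ++ w2.

Definition lang (A : finType) (tau : A -> seq A) (u : seq A) : Prop :=
  exists (n : nat) (a : A), 1 <= n /\ factor u (iter n (subst_word tau) [:: a]).

Definition lang2 (A : finType) (tau : A -> seq A) (u : seq A) : Prop :=
  size u = 2 /\ lang tau u.

(* leftmost / rightmost letter of a nonempty word (default unused for nonempty z) *)
Definition ll (A : finType) (d : A) (z : seq A) : A := head d z.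
Definition rl (A : finType) (d : A) (z : seq A) : A := last d z.

(* ll graph: edge a -> ll(tau a); rl graph: edge a -> rl(tau a) *)
Definition ll_edge (A : finType) (tau : A -> seq A) (a : A) : A := ll a (tau a).
Definition rl_edge (A : finType) (tau : A -> seq A) (a : A) : A := rl a (tau a).

Definition subfixed (A : finType) (g : A -> A) : Prop :=
  forall x : A, g x = x \/ g (g x) = g x.

Definition Wset (A : finType) (tau : A -> seq A) (u : seq A) : Prop :=
  size u = 2 /\ exists a : A, factor u (tau a).

(* Main.v *)
Require Import Defs.
From mathcomp Require Import all_boot.

Lemma factor2_cat (A : finType) (c d : A) (s t : seq A) :
  factor [:: c; d] (s ++ t) ->
  factor [:: c; d] s \/ factor [:: c; d] t \/
  (exists s' t', s = rcons s' c /\ t = d :: t').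
Proof.
elim: s => [|x s IH] /= [w1 [w2 E]].
  by right; left; exists w1, w2.
case: w1 E => [|y w1] /= [Ex E].
  subst x. case: s IH E => [|z s] IH /= E.
    by right; right; exists [::], w2; split; last exact: E.
  move: E => [Ez _]; subst z. by left; exists [::], s.
subst y.
have [[v1 [v2 ->]]|[H|[s' [t' [-> ->]]]]] : factor [:: c; d] s \/ factor [:: c; d] t \/
  (exists s' t', s = rcons s' c /\ t = d :: t') by apply: IH; exists w1, w2.
- by left; exists (x :: v1), v2.
- by right; left.
- by right; right; exists (x :: s'), t'.
Qed.

Lemma subst_cat (A : finType) (tau : A -> seq A) s t :
  subst_word tau (s ++ t) = subst_word tau s ++ subst_word tau t.
Proof. by rewrite /subst_word map_cat flatten_cat. Qed.

Lemma key (A : finType) (tau : A -> seq A)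
  (hne : forall a : A, tau a != [::]) (c d : A) (w : seq A) :
  factor [:: c; d] (subst_word tau w) ->
  (exists x, factor [:: c; d] (tau x)) \/
  exists x y, factor [:: x; y] w /\ c = rl x (tau x) /\ d = ll y (tau y).
Proof.
elim: w => [|x w IH].
  by move=> [w1 [w2]]; case: w1.
change (subst_word tau (x :: w)) with (tau x ++ subst_word tau w).
move/factor2_cat => [H|[H|[s' [t' [E1 E2]]]]].
- by left; exists x.
- case: (IH H) => [H1|[x' [y [[v1 [v2 E]] [E3 E4]]]]]; first by left.
  right; exists x', y; split => //; exists (x :: v1), v2; by rewrite E.
- right. case: w IH E2 => [|y w] IH E2; first by [].
  exists x, y; split; first by exists [::], w.
  split; first by rewrite /rl E1 last_rcons.
  move: E2; change (subst_word tau (y :: w)) with (tau y ++ subst_word tau w); rewrite /rl /ll.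
  move: (hne y); case: (tau y) => [|z r] //= _ [->] //.
Qed.

Theorem mainTheorem12 (A : finType) (tau : A -> seq A)
  (hA : 0 < #|A|)
  (hne : forall a : A, tau a != [::])
  (hll : subfixed (ll_edge tau))
  (hrl : subfixed (rl_edge tau)) :
  forall u : seq A,
    lang2 tau u <->
    (Wset tau u \/
     exists a b : A, Wset tau [:: a; b] /\
       u = [:: rl a (tau a); ll b (tau b)]).
Proof.
have gg : forall g : A -> A, subfixed g -> forall x, g (g x) = g x.
  by move=> g hg x; case: (hg x) => H; [rewrite !H | exact H].
have s1 : forall a, subst_word tau [:: a] = tau a by move=> a; rewrite /subst_word /= cats0.
move=> u; split.
- move=> [Hs [n [a [Hn Hf]]]].
  case: u Hs Hf => [|c [|d [|? ?]]] // _ Hf.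
  elim: n c d Hn Hf => [|n IH] // c d _.
  case: n IH => [|n] IH.
    rewrite /= s1 => Hf; left; split => //; by exists a.
  rewrite iterS => /(@key _ _ hne) [[x Hx]|[x [y [Hxy [Ec Ed]]]]].
    by left; split => //; exists x.
  right. case: (IH x y erefl Hxy) => [[_ [z Hz]]|[a' [b' [HW [Ex Ey]]]]].
    by exists x, y; rewrite Ec Ed; split => //; split => //; exists z.
  exists a', b'; split => //. rewrite Ec Ed Ex Ey.
  have := gg _ hrl a'; have := gg _ hll b'; rewrite /rl_edge /ll_edge => -> -> //.
- case=> [[Hs [a [w1 [w2 E]]]]|[a [b [[_ [c [w1 [w2 E]]]] ->]]]].
    split => //; exists 1, a; split => //; exists w1, w2; by rewrite /= s1.
  split => //; exists 2, c; split => //.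
  rewrite /= s1 E !subst_cat.
  have sa := s1 a; have sb := s1 b.
  change (subst_word tau [:: a; b]) with (tau a ++ (tau b ++ [::])); rewrite cats0.
  move: (hne a) (hne b); rewrite /rl /ll.
  case/lastP: (tau a) => [|s x] // _; case: (tau b) => [|y t] // _.
  exists (subst_word tau w1 ++ s), (t ++ subst_word tau w2).
  rewrite last_rcons /= -cats1 -!catA //.
Qed.
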